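(* Let $\mathbb{X}\subseteq\mathbb{R}^n$, let $\mathbb{Y}$ be a finite set of classes with $|\mathbb{Y}|\ge 2$, and let $D$ be a distribution on $\mathbb{X}\times\mathbb{Y}$ with joint density $p(\bm{x},k)$, marginal $p(\bm{x})=\sum_k p(\bm{x},k)$ and posterior $p(\mathrm{y}=k\mid\mathbf{x}=\bm{x})=p(\bm{x},k)/p(\bm{x})$. Fix a distance $d$ on $\mathbb{X}$ and $\epsilon>0$, and let $\mathbb{V}_{\bm{x}}=\{\bm{x'}: d(\bm{x},\bm{x'})\le\epsilon\}$. For a classifier $h:\mathbb{X}\to\mathbb{Y}$, $\operatorname{Rob}(h,\bm{x},y;\mathbb{V}_{\bm{x}})$ holds iff (i) no $\bm{x'}$ with $d(\bm{x},\bm{x'})\le\epsilon$ has $h(\bm{x'})\ne y$, and (ii) no $(\bm{x'},y')$ with $p(\bm{x'},y')>0$ and $d(\bm{x},\bm{x'})\le\epsilon$ has $h(\bm{x'})\neq y'$. Let $\zeta^\sharp_D=\inf_{h\text{ measurable}}\mathbb{E}_{(\mathbf{x},\mathrm{y})\sim D}[1-\mathbf{1}_{\operatorname{Rob}(h,\mathbf{x},\mathrm{y};\mathbb{V}_{\mathbf{x}})}]$ and let $\beta_D=\int(1-\max_k p(\mathrm{y}=k\mid\mathbf{x}=\bm{x}))\,p(\bm{x})\,d\bm{x}$ be the Bayes error. Then $$\zeta^\sharp_D\ \ge\ \frac{|\mathbb{Y}|}{|\mathbb{Y}|-1}\,\beta_D.$$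
   Context: $\zeta^\sharp_D$ is called the irreducible robustness error of $D$; $\beta_D$ is the Bayes error (the minimum misclassification probability over measurable classifiers). *)

(* Defs.v *)
From HB Require Import structures.
From mathcomp Require Import all_boot all_order all_algebra.
From mathcomp Require Import all_classical all_reals all_analysis.
Set Implicit Arguments. Unset Strict Implicit. Unset Printing Implicit Defensive.
Import Order.TTheory GRing.Theory Num.Theory.
Local Open Scope classical_set_scope.
Local Open Scope ring_scope.

(* Lebesgue measure on R^n, with R^n represented as n.-tuple R (product
   Borel sigma-algebra), defined by iterating the product measure:
   lambda_0 = Dirac mass at the empty tuple,
   lambda_{n+1} = pushforward of (lebesgue_measure \x lambda_n) under
                  (x, t) |-> x :: t. *)
Fixpoint lebesgue_Rn (R : realType) (n : nat) : set (n.-tuple R) -> \bar R :=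
  match n with
  | 0 => fun A => (\1_A [tuple] : R)%:E
  | n'.+1 => pushforward
               (product_measure1 (@lebesgue_measure R) (@lebesgue_Rn R n'))
               (fun p : R * n'.-tuple R => [tuple of p.1 :: p.2])
  end.

Local Open Scope ereal_scope.

Definition is_metric_on (T : Type) (R : realType) (X : set T) (d : T -> T -> R) :=
  forall x y z, X x -> X y -> X z ->
    [/\ (0 <= d x y)%R, d x y = 0%R <-> x = y, d x y = d y x
      & (d x z <= d x y + d y z)%R].

Definition marginal (T : Type) (R : realType) (Y : finType) (p : T -> Y -> R)
  (x : T) : R := (\sum_(k : Y) p x k)%R.

Definition posterior (T : Type) (R : realType) (Y : finType) (p : T -> Y -> R)
  (x : T) (k : Y) : R := (p x k / marginal p x)%R.

(* p is a joint density (w.r.t. Lebesgue measure on R^n times counting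
   measure on Y) of a probability distribution D on X * Y *)
Definition is_joint_density (R : realType) (n : nat) (X : set (n.-tuple R))
  (Y : finType) (p : n.-tuple R -> Y -> R) :=
  [/\ measurable X,
      (forall x k, X x -> (0 <= p x k)%R),
      (forall k, measurable_fun X (fun x => p x k))
    & \int[@lebesgue_Rn R n]_(x in X) (marginal p x)%:E = 1].

(* h : X -> Y is measurable (Y carries the discrete sigma-algebra) *)
Definition measurable_classifier (R : realType) (n : nat)
  (X : set (n.-tuple R)) (Y : finType) (h : n.-tuple R -> Y) :=
  forall k : Y, measurable (X `&` h @^-1` [set k]).

Definition Rob (T : Type) (R : realType) (Y : finType) (X : set T)
  (p : T -> Y -> R) (d : T -> T -> R) (eps : R) (h : T -> Y) (x : T) (y : Y)
  : Prop :=
  (forall x', X x' -> (d x x' <= eps)%R -> h x' = y) /\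
  (forall x' y', X x' -> (0 < p x' y')%R -> (d x x' <= eps)%R -> h x' = y').

Definition rob_error (R : realType) (n : nat) (X : set (n.-tuple R))
  (Y : finType) (p : n.-tuple R -> Y -> R) (d : n.-tuple R -> n.-tuple R -> R)
  (eps : R) (h : n.-tuple R -> Y) : \bar R :=
  \int[@lebesgue_Rn R n]_(x in X)
     (\sum_(k : Y) p x k * (1 - (`[< Rob X p d eps h x k >] : bool)%:R))%R%:E.

Definition irreducible_rob_error (R : realType) (n : nat) (X : set (n.-tuple R))
  (Y : finType) (p : n.-tuple R -> Y -> R) (d : n.-tuple R -> n.-tuple R -> R)
  (eps : R) : \bar R :=
  ereal_inf [set rob_error X p d eps h | h in [set h | @measurable_classifier R n X Y h]].

Definition bayes_error (R : realType) (n : nat) (X : set (n.-tuple R))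
  (Y : finType) (p : n.-tuple R -> Y -> R) : \bar R :=
  \int[@lebesgue_Rn R n]_(x in X)
     ((1 - \big[Num.max/0%R]_(k : Y) posterior p x k) * marginal p x)%R%:E.

(* Main.v *)
Require Import Defs.
From HB Require Import structures.
From mathcomp Require Import all_boot all_order all_algebra.
From mathcomp Require Import all_classical all_reals all_analysis.
Import Order.TTheory GRing.Theory Num.Theory.
Local Open Scope classical_set_scope.
Local Open Scope ring_scope.
Section gen.
Local Open Scope ereal_scope.
Context d (T : measurableType d) (R : realType).
Variable mu : set T -> \bar R.
Hypothesis mu0 : mu set0 = 0.
Hypothesis muge0 : forall A, 0 <= mu A.
Import HBNNSimple.

Lemma my_mulemu_ge0 (f : {nnsfun T >-> R}) x :
  0 <= x%:E * mu (f @^-1` [set x]).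
Proof.
have [x0|x0] := ltP x 0%R.
  by rewrite preimage_nnfun0// mu0 mule0.
by rewrite mule_ge0.
Qed.

Lemma my_sintegralrM (r : R) (f : {nnsfun T >-> R}) :
  sintegral mu (cst r \* f)%R = r%:E * sintegral mu f.
Proof.
have [->|r0] := eqVneq r 0%R.
  rewrite mul0e /sintegral fsbig1// => x _.
  have [->|x0] := eqVneq x 0%R; first by rewrite mul0e.
  rewrite (_ : _ @^-1` _ = set0) ?mu0 ?mule0//.
  by apply/seteqP; split => z //=; rewrite mul0r => /esym/eqP; rewrite (negbTE x0).
rewrite !sintegralET ge0_mule_fsumr; last exact: my_mulemu_ge0.
rewrite (reindex_fsbigT ( *%R r))/=; last first.
  by exists ( *%R r^-1); [exact: mulKf|exact: mulVKf].
by apply: eq_fsbigr => x; rewrite preimage_cstM// [(_ / r)%R]mulrC mulKf// muleA.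
Qed.

Lemma nnint0 : ereal_sup [set sintegral mu h |
  h in [set h : {nnsfun T >-> R} | forall x, (h x)%:E <= (cst 0 : T -> \bar R) x]] = 0.
Proof.
apply/eqP; rewrite eq_le; apply/andP; split.
  apply/ge_ereal_sup => _ [h /= h0 <-].
  rewrite /sintegral fsbig1// => x _.
  have [->|x0] := eqVneq x 0%R; first by rewrite mul0e.
  rewrite (_ : _ @^-1` _ = set0) ?mu0 ?mule0//.
  apply/seteqP; split => z //= hz; move: (h0 z); rewrite hz lee_fin => xle.
  have : (0 <= x)%R by rewrite -hz.
  by move=> xge; move: x0; rewrite eq_le xle xge.
apply: ereal_sup_ubound; exists nnsfun0 => //.
rewrite /sintegral fsbig1// => x _.
have [->|x0] := eqVneq x 0%R; first by rewrite mul0e.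
rewrite (_ : _ @^-1` _ = set0) ?mu0 ?mule0//.
by apply/seteqP; split => z //= /esym/eqP; rewrite (negbTE x0).
Qed.

Lemma my_ge0_integralE D (F : T -> \bar R) : (forall x, D x -> 0 <= F x) ->
  integral mu D F = ereal_sup [set sintegral mu h |
  h in [set h : {nnsfun T >-> R} | forall x, (h x)%:E <= (F \_ D) x]].
Proof.
move=> F0; rewrite /integral.
have Hp : (F \_ D)^\+ = F \_ D.
  apply/funext => x; rewrite funeposE /patch; case: ifPn => [/[!inE] /F0 h|_].
    by rewrite max_l.
  by rewrite maxxx.
have Hn : (F \_ D)^\- = cst 0.
  apply/funext => x; rewrite funenegE /patch; case: ifPn => [/[!inE] /F0 h|_].
    by rewrite max_r// leeNl oppe0.
  by rewrite oppe0 maxxx.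
by rewrite Hp Hn nnint0 sube0.
Qed.

Lemma sint_nnsfun0 : sintegral mu (@nnsfun0 _ T R) = 0.
Proof.
rewrite /sintegral fsbig1// => x _.
have [->|x0] := eqVneq x 0%R; first by rewrite mul0e.
rewrite (_ : _ @^-1` _ = set0) ?mu0 ?mule0//.
by apply/seteqP; split => z //= /esym/eqP; rewrite (negbTE x0).
Qed.

Lemma scale_le_integral D (c : R) (f g : T -> R) : (0 <= c)%R ->
  (forall x, D x -> 0 <= f x)%R -> (forall x, D x -> c * f x <= g x)%R ->
  c%:E * integral mu D (fun x => (f x)%:E) <= integral mu D (fun x => (g x)%:E).
Proof.
move=> c0 f0 fg.
have g0 : forall x, D x -> (0 <= g x)%R.
  by move=> x Dx; apply: le_trans (fg x Dx); rewrite mulr_ge0// f0.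
rewrite !my_ge0_integralE => [|x Dx|x Dx]; rewrite ?lee_fin ?f0 ?g0//.
have [->|cpos] := eqVneq c 0%R.
  rewrite mul0e; apply: ereal_sup_ubound; exists nnsfun0; last exact: sint_nnsfun0.
  move=> x /=; rewrite /patch; case: ifPn => // /[!inE] /g0; by rewrite lee_fin.
have cgt0 : (0 < c)%R by rewrite lt_neqAle eq_sym cpos c0.
set S' := (X in _ <= X).
suff H : ereal_sup [set sintegral mu h | h in [set h : {nnsfun T >-> R} |
    forall x, (h x)%:E <= ((fun x => (f x)%:E) \_ D) x]] <= c^-1%:E * S'.
  apply: le_trans (lee_wpmul2l (x := c%:E) _ H) _; first by rewrite lee_fin.
  by rewrite muleA -EFinM mulfV// mul1e.
apply/ge_ereal_sup => _ [s /= hs <-].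
have -> : sintegral mu s = c^-1%:E * sintegral mu (cst c \* s)%R.
  by rewrite my_sintegralrM muleA -EFinM mulVf// mul1e.
apply: lee_wpmul2l; first by rewrite lee_fin invr_ge0.
apply: ereal_sup_ubound; exists (scale_nnsfun s c0) => //.
move=> x /=; move: (hs x); rewrite /patch; case: ifPn => [/[!inE] Dx|_].
  rewrite !lee_fin => sf; apply: le_trans (fg x Dx); exact: ler_wpM2l.
rewrite !lee_fin => s0; exact: mulr_ge0_le0.
Qed.
End gen.

Local Open Scope ring_scope.
Lemma pointwise (R : realType) (T : Type) (Y : finType) (X : set T)
  (p : T -> Y -> R) (d : T -> T -> R) (eps : R) (h : T -> Y) (x : T) :
  (2 <= #|Y|)%N -> (forall x k, X x -> 0 <= p x k) -> is_metric_on X d ->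
  0 < eps -> X x ->
  0 <= (1 - \big[Num.max/0%R]_(k : Y) posterior p x k) * marginal p x /\
  (#|Y|%:R / (#|Y|%:R - 1)) *
    ((1 - \big[Num.max/0%R]_(k : Y) posterior p x k) * marginal p x)
  <= \sum_(k : Y) p x k * (1 - (`[< Rob X p d eps h x k >] : bool)%:R).
Proof.
move=> K2 p0 dmet eps0 Xx.
set m := marginal p x.
set M := \big[Num.max/0%R]_(k : Y) posterior p x k.
set RHS := \sum_(k : Y) _.
have m0 : 0 <= m by apply: sumr_ge0 => k _; exact: p0.
have RHS0 : 0 <= RHS.
  apply: sumr_ge0 => k _; apply: mulr_ge0; first exact: p0.
  by case: (`[< _ >]); rewrite ?subrr ?subr0.
have [m00|mpos] := eqVneq m 0.
  by rewrite m00 mulr0 mulr0; split.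
have mgt0 : 0 < m by rewrite lt_neqAle eq_sym mpos m0.
have pm : forall k, p x k <= m.
  move=> k; rewrite /m /marginal (bigD1 k) //= lerDl.
  by apply: sumr_ge0 => i _; exact: p0.
have post1 : forall k, posterior p x k <= 1.
  by move=> k; rewrite /posterior ler_pdivrMr// mul1r.
have M1 : M <= 1.
  apply/bigmax_leP; split => // k _; exact: post1.
have KM : 1 <= M * #|Y|%:R.
  have E1 : \sum_(k : Y) posterior p x k = 1.
    by rewrite /posterior -mulr_suml -/(marginal p x) -/m mulfV.
  have S : \sum_(k : Y) M = M * #|Y|%:R by rewrite sumr_const mulr_natr.
  rewrite -S; apply: le_trans (_ : \sum_(k : Y) posterior p x k <= _).
    by rewrite E1.
  apply: ler_sum => k _; exact: le_bigmax.
have K1 : 0 < #|Y|%:R - 1 :> R.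
  by rewrite subr_gt0 ltr1n.
have Hc : (#|Y|%:R / (#|Y|%:R - 1)) * (1 - M) <= 1.
  rewrite mulrAC ler_pdivrMr// mul1r mulrBr mulr1 lerD2l lerN2 mulrC //.
have B0 : 0 <= (1 - M) * m by rewrite mulr_ge0// subr_ge0.
split => //.
have [[k0 Rk0]|nR] := pselect (exists k, Rob X p d eps h x k).
  have hx : h x = k0.
    case: Rk0 => Hi _; apply: Hi => //.
    have [_ [_ /(_ erefl) -> _] _] := dmet x x x Xx Xx Xx.
    exact: ltW.
  have pz : forall k, k != k0 -> p x k = 0.
    move=> k kk0; apply/eqP; rewrite eq_le p0 // andbT leNgt; apply/negP => pk.
    case: Rk0 => _ Hii.
    have : h x = k.
      apply: Hii => //.
      have [_ [_ /(_ erefl) -> _] _] := dmet x x x Xx Xx Xx.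
      exact: ltW.
    by rewrite hx => E; move: kk0; rewrite E eqxx.
  have mk0 : m = p x k0.
    rewrite /m /marginal (bigD1 k0) //= big1 ?addr0// => k kk0; exact: pz.
  have M1' : 1 <= M.
    apply: le_trans (le_bigmax _ _ k0).
    by rewrite /posterior -/(marginal p x) -/m -mk0 mulfV.
  have -> : M = 1 by apply/eqP; rewrite eq_le M1 M1'.
  by rewrite subrr mul0r mulr0.
have -> : RHS = m.
  rewrite /RHS /m /marginal; apply: eq_bigr => k _.
  have -> : `[< Rob X p d eps h x k >] = false.
    by apply/asboolP => Rk; apply: nR; exists k.
  by rewrite subr0 mulr1.
rewrite mulrA; apply: le_trans (ler_wpM2r m0 Hc) _.
by rewrite mul1r.
Qed.

Lemma lebRn_props (R : realType) (n : nat) :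
  (@lebesgue_Rn R n set0 = 0 /\ forall A, 0 <= @lebesgue_Rn R n A)%E.
Proof.
elim: n => [|n [IH0 IHge]] /=.
  split; first by rewrite indic0.
  move=> A; rewrite lee_fin /indic; by case: (_ \in _).
split.
  rewrite /pushforward preimage_set0 /product_measure1.
  apply: integral0_eq => x _ /=.
  by rewrite xsection0 IH0.
move=> A; rewrite /pushforward /product_measure1.
by apply: integral_ge0 => x _; exact: IHge.
Qed.

Theorem corollary1 (R : realType) (n : nat) (X : set (n.-tuple R))
  (Y : finType) (p : n.-tuple R -> Y -> R)
  (d : n.-tuple R -> n.-tuple R -> R) (eps : R) :
  (2 <= #|Y|)%N ->
  is_joint_density X p ->
  is_metric_on X d ->
  0 < eps ->
  ((#|Y|%:R / (#|Y|%:R - 1))%:E * bayes_error X p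
     <= irreducible_rob_error X p d eps)%E.
Proof.
move=> K2 [mX p0 pm int1] dmet eps0.
have [mu0 muge0] := lebRn_props R n.
apply: le_ereal_inf_tmp => _ [h hmeas <-].
rewrite /rob_error /bayes_error.
apply: (@scale_le_integral _ _ _ _ mu0 muge0 X _ (fun x => (1 - \big[Num.max/0%R]_(k : Y) posterior p x k) * marginal p x) (fun x => \sum_(k : Y) p x k * (1 - (`[< Rob X p d eps h x k >] : bool)%:R))).
- apply: divr_ge0 => //; rewrite subr_ge0 ler1n; exact: leq_trans K2.
- by move=> x Xx; have [] := @pointwise R _ Y X p d eps h x K2 p0 dmet eps0 Xx.
- by move=> x Xx; have [] := @pointwise R _ Y X p d eps h x K2 p0 dmet eps0 Xx.
Qed.
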